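(* Let $\mathcal U_1,\mathcal U_2$ be essential covers of $X$, let $f\colon X\to X$ be a map, and let $\mathcal F_1\colon\mathcal U_1\multimap\mathcal U_1$ be a representation of $f$. If $\mathcal R^-(\mathcal U_2)>\mathcal R^+(\mathcal F_1)$, then every representation $\mathcal F_2\colon\mathcal U_2\multimap\mathcal U_2$ of $f$ is coarser than $\mathcal F_1$ (i.e. $\mathcal F_1$ is finer than $\mathcal F_2$).
   Context: $X$ is a nonempty metric space with bounded metric $d$; $B(x,r)=\{y\in X:d(x,y)<r\}$ for $r>0$ and $B(x,0)=\{x\}$. For a family $\mathcal A$ of subsets of $X$, $|\mathcal A|:=\bigcup_{A\in\mathcal A}A$. A cover of $X$ is a finite family $\mathcal U$ of open subsets of $X$ with $|\mathcal U|=X$. A cover $\mathcal U$ is essential if there is $\varepsilon>0$ such that every $U\in\mathcal U$ contains a point $x$ with $B(x,\varepsilon)\subset U$ and $B(x,\varepsilon)\cap W=\emptyset$ for all $W\in\mathcal U\setminus\{U\}$. Inner resolution: $\mathcal R^-(\mathcal U)=\sup\{d\ge0:\forall x\in X\ \exists U\in\mathcal U:\ B(x,d)\subset U\}$. $\mathcal U_1\prec\mathcal U_2$ means every element of $\mathcal U_1$ is contained in some element of $\mathcal U_2$ and every element of $\mathcal U_2$ contains some element of $\mathcal U_1$. A combinatorial map $\mathcal F\colon\mathcal U\multimap\mathcal U$ assigns to each $U\in\mathcal U$ a subset $\mathcal F(U)\subset\mathcal U$; it is a representation of $f$ if $\mathcal F(U)\supseteq\{W\in\mathcal U:W\cap f(U)\neq\emptyset\}$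 for all $U$. $\mathcal R^+(\mathcal F)=\max\{\operatorname{diam}U,\operatorname{diam}|\mathcal F(U)|:U\in\mathcal U\}$. $\mathcal F_1\colon\mathcal U_1\multimap\mathcal U_1$ is finer than $\mathcal F_2\colon\mathcal U_2\multimap\mathcal U_2$ if $\mathcal U_1\prec\mathcal U_2$ and for every $U_1\in\mathcal U_1$ and every $U_2\in\mathcal U_2$ with $U_1\subset U_2$, every element of $\mathcal F_1(U_1)$ is contained in some element of $\mathcal F_2(U_2)$. *)

(* Defs.v *)
From Stdlib Require Import Reals List.
Open Scope R_scope.

Section Defs.
Context {X : Type} (d : X -> X -> R).

Definition is_metric : Prop :=
  (forall x y, 0 <= d x y) /\ (forall x y, d x y = 0 <-> x = y) /\
  (forall x y, d x y = d y x) /\ (forall x y z, d x z <= d x y + d y z).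

Definition bounded_metric : Prop := exists M, forall x y, d x y <= M.

Definition ball (x : X) (r : R) (y : X) : Prop :=
  (0 < r /\ d x y < r) \/ (r <= 0 /\ y = x).

Definition is_open (A : X -> Prop) : Prop :=
  forall x, A x -> exists e, 0 < e /\ forall y, d x y < e -> A y.

Definition subset (A B : X -> Prop) : Prop := forall x, A x -> B x.

(* |A| for a finite family given as a list *)
Definition union (l : list (X -> Prop)) (x : X) : Prop :=
  exists A, In A l /\ A x.

Definition is_cover (U : list (X -> Prop)) : Prop :=
  (forall A, In A U -> is_open A) /\ (forall x, union U x).

Definition is_essential (U : list (X -> Prop)) : Prop :=
  exists eps, 0 < eps /\
    forall A, In A U -> exists x,
      subset (ball x eps) A /\
      (forall W, In W U -> W <> A -> forall y, ball x eps y -> ~ W y).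

Definition essential_cover (U : list (X -> Prop)) : Prop :=
  is_cover U /\ is_essential U.

Definition inner_res_ok (U : list (X -> Prop)) (r : R) : Prop :=
  0 <= r /\ forall x, exists A, In A U /\ subset (ball x r) A.

(* R^-(U) > r  (R^- is the sup of admissible radii, possibly +infinity) *)
Definition inner_res_gt (U : list (X -> Prop)) (r : R) : Prop :=
  exists s, inner_res_ok U s /\ r < s.

Definition diam_le (A : X -> Prop) (r : R) : Prop :=
  forall x y, A x -> A y -> d x y <= r.

Definition comb_map (U : list (X -> Prop)) (F : (X -> Prop) -> list (X -> Prop)) : Prop :=
  forall A, In A U -> forall W, In W (F A) -> In W U.

Definition is_representation (f : X -> X) (U : list (X -> Prop))
    (F : (X -> Prop) -> list (X -> Prop)) : Prop :=
  comb_map U F /\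
  forall A, In A U -> forall W, In W U -> (exists x, A x /\ W (f x)) -> In W (F A).

(* R^+(F) <= r, i.e. max over A in U of diam A and diam |F(A)| is <= r *)
Definition outer_res_le (U : list (X -> Prop)) (F : (X -> Prop) -> list (X -> Prop)) (r : R) : Prop :=
  forall A, In A U -> diam_le A r /\ diam_le (union (F A)) r.

Definition refines (U1 U2 : list (X -> Prop)) : Prop :=
  (forall A, In A U1 -> exists B, In B U2 /\ subset A B) /\
  (forall B, In B U2 -> exists A, In A U1 /\ subset A B).

Definition finer (U1 : list (X -> Prop)) (F1 : (X -> Prop) -> list (X -> Prop))
    (U2 : list (X -> Prop)) (F2 : (X -> Prop) -> list (X -> Prop)) : Prop :=
  refines U1 U2 /\
  forall A1, In A1 U1 -> forall A2, In A2 U2 -> subset A1 A2 ->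
    forall V, In V (F1 A1) -> exists W, In W (F2 A2) /\ subset V W.

End Defs.

(* Main.v *)
Require Import Defs.
From Stdlib Require Import Reals List Lra Classical.
Open Scope R_scope.

Theorem mainTheorem4 (X : Type) (d : X -> X -> R)
  (hX : inhabited X) (hd : is_metric d) (hb : bounded_metric d)
  (U1 U2 : list (X -> Prop))
  (hU1 : essential_cover d U1) (hU2 : essential_cover d U2)
  (f : X -> X) (F1 : (X -> Prop) -> list (X -> Prop))
  (hF1 : is_representation f U1 F1)
  (hres : exists r, outer_res_le d U1 F1 r /\ inner_res_gt d U2 r) :
  forall F2 : (X -> Prop) -> list (X -> Prop),
    is_representation f U2 F2 -> finer U1 F1 U2 F2.
Proof.
  intros F2 hF2.
  destruct hd as [hpos [hzero [hsym htri]]].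
  assert (dxx : forall x, d x x = 0) by (intro x; apply hzero; reflexivity).
  destruct hres as [r [hout [s [[hs0 hs] hrs]]]].
  destruct hU1 as [[hU1o hU1c] [e1 [he1 hU1e]]].
  destruct hU2 as [[hU2o hU2c] [e2 [he2 hU2e]]].
  destruct hF1 as [hF1c hF1r]. destruct hF2 as [hF2c hF2r].
  split; [split|].
  - intros A HA.
    destruct (hU1e A HA) as [a [hsub _]].
    assert (Aa : A a) by (apply hsub; left; split; [lra|rewrite dxx; lra]).
    destruct (hout A HA) as [hdA _].
    assert (r0 : 0 <= r) by (pose proof (hdA a a Aa Aa); rewrite dxx in *; lra).
    destruct (hs a) as [B [HB hB]].
    exists B; split; auto.
    intros y Ay. apply hB. left. split; [lra|]. pose proof (hdA a y Aa Ay); lra.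
  - intros B HB.
    destruct (hU2e B HB) as [x [hsub hdisj]].
    destruct (hU1c x) as [A [HA Ax]].
    destruct (hout A HA) as [hdA _].
    assert (r0 : 0 <= r) by (pose proof (hdA x x Ax Ax); rewrite dxx in *; lra).
    destruct (hs x) as [B' [HB' hB']].
    assert (B'x : B' x) by (apply hB'; left; split; [lra|rewrite dxx; lra]).
    destruct (classic (B' = B)) as [E|NE].
    + subst B'. exists A; split; auto.
      intros y Ay. apply hB'. left. split; [lra|]. pose proof (hdA x y Ax Ay); lra.
    + exfalso. apply (hdisj B' HB' NE x); auto. left; split; [lra|rewrite dxx; lra].
  - intros A1 HA1 A2 HA2 hsub V HV.
    destruct (hU1e A1 HA1) as [a [hsa _]].
    assert (Aa : A1 a) by (apply hsa; left; split; [lra|rewrite dxx; lra]).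
    destruct (hU1c (f a)) as [V' [HV' V'fa]].
    assert (HV'F : In V' (F1 A1)) by (apply hF1r; eauto).
    destruct (hout A1 HA1) as [_ hdU].
    assert (ufa : union (F1 A1) (f a)) by (exists V'; auto).
    assert (r0 : 0 <= r) by (pose proof (hdU _ _ ufa ufa); rewrite dxx in *; lra).
    destruct (hs (f a)) as [W [HW hW]].
    assert (Wfa : W (f a)) by (apply hW; left; split; [lra|rewrite dxx; lra]).
    exists W; split.
    + apply hF2r; auto. exists a; split; auto.
    + intros y Vy. apply hW. left. split; [lra|].
      assert (uy : union (F1 A1) y) by (exists V; auto).
      pose proof (hdU _ _ ufa uy); lra.
Qed.
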